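(* For every $\delta>0$ there exists $p=\Theta(1/\sqrt n)$ such that the public-key encryption scheme $(\mathsf{Gen},\mathsf{Enc},\mathsf{Dec})$ described in the context, with parameter $p$, is $(1-\delta)$-correct: for every $\mu\in\{0,1\}$, $\Pr[\mathsf{Dec}(\mathsf{sk},\mathsf{ct})=\mu : (\mathsf{pk},\mathsf{sk})\leftarrow\mathsf{Gen}(1^n),\ \mathsf{ct}\leftarrow\mathsf{Enc}(\mathsf{pk},\mu)]\ge 1-\delta.$
   Context: Symplectic inner product on $\mathbb{Z}_2^{2n}$: $(\mathbf a,\mathbf b)\odot(\mathbf a',\mathbf b')=\mathbf a\cdot\mathbf b'+\mathbf a'\cdot\mathbf b\pmod2$; for $\mathbf f\in\mathbb{Z}_2^{2n}$ and a matrix $\mathbf A$ with $2n$ rows, $\mathbf f\odot\mathbf A$ is the row vector whose $j$-th entry is $\mathbf f\odot(\text{$j$-th column of }\mathbf A)$. A ''random full-rank isotropic matrix'' $\mathbf A\in\mathbb{Z}_2^{2n\times n}$ is uniform among matrices of column rank $n$ whose columns are pairwise symplectically orthogonal. $\mathcal{D}_p^{\otimes n}$: random $\mathbf e\in\mathbb{Z}_2^{2n}$ with independent pairs $(e_j,e_{n+j})$, each $(0,0)$ w.p. $1-p$ and each of $(0,1),(1,0),(1,1)$ w.p. $p/3$. The scheme (security parameter $n$): $\mathsf{Gen}(1^n)$ samples a random full-rank isotropic $\mathbf A\in\mathbb{Z}_2^{2n\times n}$, $\mathbf x\sim\mathbb{Z}_2^n$ uniform, $\mathbf e\sim\mathcal{D}_p^{\otimes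 n}$, and outputs $\mathsf{pk}=(\mathbf A,\mathbf b=\mathbf A\mathbf x+\mathbf e)$, $\mathsf{sk}=\mathbf x$. $\mathsf{Enc}(\mathsf{pk},\mu)$ for $\mu\in\{0,1\}$ samples fresh $\mathbf f\sim\mathcal{D}_p^{\otimes n}$ and outputs $\mathsf{ct}=(\mathbf f\odot\mathbf A,\ \mathbf f\odot\mathbf b+\mu)$. $\mathsf{Dec}(\mathsf{sk},(\mathbf u,c))$ outputs $c+\mathbf u\cdot\mathbf x \pmod 2$ (standard dot product). *)

(* Defs.v *)
From HB Require Import structures.
From mathcomp Require Import all_boot all_order all_algebra.
Set Implicit Arguments. Unset Strict Implicit. Unset Printing Implicit Defensive.
Import Order.TTheory GRing.Theory Num.Theory.
Local Open Scope ring_scope.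

(* Vectors of Z_2^{2n} are column vectors 'cV['F_2]_(n + n); coordinate j (j < n)
   of the "a" half is index lshift n j, coordinate n+j ("b" half) is rshift n j. *)

Definition symp n (f g : 'cV['F_2]_(n + n)) : 'F_2 :=
  \sum_(j < n) (f (lshift n j) 0 * g (rshift n j) 0
              + g (lshift n j) 0 * f (rshift n j) 0).

Definition sympA n k (f : 'cV['F_2]_(n + n)) (A : 'M['F_2]_(n + n, k)) : 'rV['F_2]_k :=
  \row_j symp f (col j A).

Definition iso_full n (A : 'M['F_2]_(n + n, n)) : bool :=
  (\rank A == n) && [forall i, forall j, symp (col i A) (col j A) == 0].

Definition Dp (R : fieldType) (p : R) n (e : 'cV['F_2]_(n + n)) : R :=
  \prod_(j < n) (if (e (lshift n j) 0 == 0) && (e (rshift n j) 0 == 0)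
                 then 1 - p else p / 3).

(* Gen, given its randomness (A, x, e): returns (pk, sk) *)
Definition Gen n (A : 'M['F_2]_(n + n, n)) (x : 'cV['F_2]_n) (e : 'cV['F_2]_(n + n))
  : ('M['F_2]_(n + n, n) * 'cV['F_2]_(n + n)) * 'cV['F_2]_n :=
  ((A, A *m x + e), x).

(* Enc, given its randomness f *)
Definition Enc n (pk : 'M['F_2]_(n + n, n) * 'cV['F_2]_(n + n)) (mu : 'F_2)
  (f : 'cV['F_2]_(n + n)) : 'rV['F_2]_n * 'F_2 :=
  (sympA f pk.1, symp f pk.2 + mu).

Definition Dec n (sk : 'cV['F_2]_n) (ct : 'rV['F_2]_n * 'F_2) : 'F_2 :=
  ct.2 + (ct.1 *m sk) 0 0.

(* Pr[Dec(sk, Enc(pk, mu)) = mu], A uniform among full-rank isotropic matrices,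
   x uniform, e, f ~ D_p^{(x) n} independent *)
Definition correct_prob (R : fieldType) (p : R) n (mu : 'F_2) : R :=
  \sum_(A : 'M['F_2]_(n + n, n) | iso_full A)
  \sum_(x : 'cV['F_2]_n) \sum_(e : 'cV['F_2]_(n + n)) \sum_(f : 'cV['F_2]_(n + n))
    ((#|[set B : 'M['F_2]_(n + n, n) | iso_full B]|%:R)^-1 * ((2 ^ n)%N%:R)^-1
     * Dp p e * Dp p f
     * (let k := Gen A x e in (Dec k.2 (Enc k.1 mu f) == mu)%:R)).

(* Main.v *)
Require Import Defs.
From HB Require Import structures.
From mathcomp Require Import all_boot all_order all_algebra.
From mathcomp Require Import ring lra.
Import Order.TTheory GRing.Theory Num.Theory.
Local Open Scope ring_scope.

Lemma F2_addxx (x : 'F_2) : x + x = 0.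
Proof. apply/val_inj. case: x => [[|[|m]] Hm] //=. Qed.

Lemma symp_addr n (f g h : 'cV['F_2]_(n + n)) : symp f (g + h) = symp f g + symp f h.
Proof.
rewrite /symp -big_split /=; apply: eq_bigr => j _; rewrite !mxE; ring.
Qed.

Lemma symp_mul n (f : 'cV['F_2]_(n + n)) (A : 'M['F_2]_(n + n, n)) x :
  symp f (A *m x) = (sympA f A *m x) 0 0.
Proof.
rewrite /symp /sympA mxE.
under [RHS]eq_bigr => k _ do rewrite mxE big_distrl /=.
rewrite exchange_big /=; apply: eq_bigr => j _.
rewrite !mxE mulr_sumr mulr_suml -big_split /=; apply: eq_bigr => k _.
rewrite !mxE; ring.
Qed.

Lemma dec_eq n (A : 'M['F_2]_(n + n, n)) x e f mu :
  (let k := Gen A x e in (Dec k.2 (Enc k.1 mu f) == mu)) = (symp f e == 0).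
Proof.
rewrite /= /Dec /Enc /= symp_addr -symp_mul.
set s := symp f (A *m x).
have -> : s + symp f e + mu + s = symp f e + mu + (s + s) by ring.
by rewrite F2_addxx addr0 -{2}[mu]add0r (inj_eq (addIr mu)).
Qed.

Lemma iso_ex n : exists A, iso_full (n := n) A.
Proof.
exists (col_mx (1%:M : 'M['F_2]_n) 0).
rewrite /iso_full rank_col_mx0 mxrank1 eqxx /=.
apply/forallP => i; apply/forallP => j; apply/eqP; rewrite /symp big1 // => k _.
have E l : col l (col_mx (1%:M : 'M['F_2]_n) 0) (rshift n k) 0 = 0 by rewrite mxE col_mxEd mxE.
by rewrite !E !mulr0 addr0.
Qed.

Lemma sumF2 (R : rcfType) (F : 'F_2 -> R) : \sum_(x : 'F_2) F x = F 0 + F 1.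
Proof. rewrite (@big_ord_recr _ _ _ 1 F) big_ord_recr big_ord0 /= add0r. by congr (F _ + F _); apply/val_inj. Qed.

Lemma sum_pair (R : rcfType) (T1 T2 : finType) (F : T1 * T2 -> R) :
  \sum_q F q = \sum_a \sum_b F (a, b).
Proof. by rewrite pair_big; apply: eq_bigr => -[]. Qed.

Section P.
Variable (R : rcfType) (p : R).
Definition w (a : 'F_2 * 'F_2) : R := if (a.1 == 0) && (a.2 == 0) then 1 - p else p / 3.
Definition J := (('F_2 * 'F_2) * ('F_2 * 'F_2))%type.
Definition bz (q : J) : bool := ((q.1.1 == 0) && (q.1.2 == 0)) || ((q.2.1 == 0) && (q.2.2 == 0)).
Definition Fq (q : J) : R := w q.1 * w q.2 * (bz q)%:R.

Lemma F2_10 : (1 == 0 :> 'F_2) = false. Proof. by []. Qed.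

Lemma sumJ : \sum_(q : J) Fq q = 1 - p ^+ 2.
Proof.
rewrite sum_pair.
under eq_bigr => a _ do rewrite sum_pair.
rewrite sum_pair.
rewrite !sumF2 /Fq /bz /w /=.
by field.
Qed.
Definition toEF n (ef : 'cV['F_2]_(n + n) * 'cV['F_2]_(n + n)) : {ffun 'I_n -> J} :=
  [ffun j => ((ef.1 (lshift n j) 0, ef.1 (rshift n j) 0),
              (ef.2 (lshift n j) 0, ef.2 (rshift n j) 0))].
Definition fromEF n (phi : {ffun 'I_n -> J}) : 'cV['F_2]_(n + n) * 'cV['F_2]_(n + n) :=
  (col_mx (\col_j (phi j).1.1) (\col_j (phi j).1.2),
   col_mx (\col_j (phi j).2.1) (\col_j (phi j).2.2)).

Lemma toEF_bij n : bijective (@toEF n).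
Proof.
exists (@fromEF n).
- move=> [e f]; rewrite /fromEF /toEF /=.
  congr pair; rewrite -[RHS]vsubmxK; congr col_mx; apply/matrixP => i k;
    by rewrite !mxE ffunE /= ord1.
- move=> phi; apply/ffunP => j; rewrite ffunE /fromEF /= !col_mxEu !col_mxEd !mxE.
  by case: (phi j) => [[a b] [c d]].
Qed.

Lemma Dp_ge0 n e : 0 <= p <= 1 -> 0 <= Dp p (n := n) e.
Proof.
move=> /andP[p0 p1]; apply: prodr_ge0 => j _; case: ifP => _.
  by rewrite subr_ge0.
by apply: divr_ge0 => //; rewrite ler0n.
Qed.

Lemma Tbound n : 0 <= p <= 1 ->
  (1 - p ^+ 2) ^+ n <= \sum_(e : 'cV['F_2]_(n + n)) \sum_(f : 'cV['F_2]_(n + n))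
       Dp p e * Dp p f * (symp f e == 0)%:R.
Proof.
move=> hp.
have -> : (1 - p ^+ 2) ^+ n = \prod_(j < n) \sum_(q : J) Fq q.
  by rewrite sumJ prodr_const card_ord.
rewrite bigA_distr_bigA /= (reindex (@toEF n)); last first.
  by apply: onW_bij; apply: toEF_bij.
rewrite sum_pair; apply: ler_sum => e _; apply: ler_sum => f _.
rewrite /Fq.
under eq_bigr => j _ do rewrite ffunE /=.
rewrite big_split big_split /=.
rewrite -/(Dp p e) -/(Dp p f).
apply: ler_wpM2l; first by apply: mulr_ge0; apply: Dp_ge0.
case: (boolP [forall j, bz ((e (lshift n j) 0, e (rshift n j) 0),
              (f (lshift n j) 0, f (rshift n j) 0))]) => [/forallP H|].
  rewrite big1; last by move=> j _; rewrite H.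
  have -> : symp f e = 0.
    rewrite /symp big1 // => j _; move: (H j); rewrite /bz /=.
    by case/orP => /andP[/eqP -> /eqP ->]; rewrite !mulr0 ?mul0r ?addr0.
  by rewrite eqxx.
rewrite negb_forall => /existsP[j Hj].
by rewrite (bigD1 j) //= (negbTE Hj) mul0r ler0n.
Qed.
End P.

Lemma bernoulli (R : rcfType) (x : R) n : 0 <= x <= 1 -> 1 - n%:R * x <= (1 - x) ^+ n.
Proof.
move=> /andP[x0 x1]; elim: n => [|n IH]; first by rewrite mul0r subr0 expr0.
rewrite exprS -[n.+1]addn1 natrD.
have h1 : 0 <= 1 - x by rewrite subr_ge0.
have h2 : 0 <= n%:R :> R by rewrite ler0n.
nra.
Qed.

Lemma cp_eq (R : rcfType) (p : R) n mu :
  correct_prob p n mu = \sum_(e : 'cV['F_2]_(n + n)) \sum_(f : 'cV['F_2]_(n + n))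
       Dp p e * Dp p f * (symp f e == 0)%:R.
Proof.
rewrite /correct_prob.
set T := (X in _ = X).
set S := #|[set B : 'M['F_2]_(n + n, n) | iso_full B]|.
have H : forall A x, \sum_(e : 'cV['F_2]_(n + n)) \sum_(f : 'cV['F_2]_(n + n))
    ((S%:R)^-1 * ((2 ^ n)%N%:R)^-1 * Dp p e * Dp p f *
     (let k := Gen A x e in (Dec k.2 (Enc k.1 mu f) == mu)%:R))
   = (S%:R)^-1 * ((2 ^ n)%N%:R)^-1 * T.
  move=> A x; rewrite /T mulr_sumr; apply: eq_bigr => e _.
  rewrite mulr_sumr; apply: eq_bigr => f _.
  have := dec_eq _ A x e f mu; rewrite /= => ->; by rewrite !mulrA.
under eq_bigr => A _ do under eq_bigr => x _ do rewrite H.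
under eq_bigr => A _ do rewrite sumr_const card_mx card_Fp //.
rewrite sumr_const.
have -> : #|[pred B : 'M['F_2]_(n + n, n) | iso_full B]| = S by rewrite /S; apply: eq_card => B; rewrite inE.
case: (iso_ex n) => A0 HA0.
have S0 : (0 < S)%N by apply/card_gt0P; exists A0; rewrite inE.
have s0 : S%:R != 0 :> R by rewrite pnatr_eq0 -lt0n.
have t0 : (2 ^ n)%:R != 0 :> R by rewrite pnatr_eq0 expn_eq0.
clear H; clearbody T S.
have E : forall (x : R) k, x *+ k = x * k%:R by move=> x k; rewrite mulr_natr.
rewrite (E _ S) (E _ (2 ^ (n * 1))%N) muln1.
by field; rewrite t0 s0.
Qed.

Theorem theorem5p2 (R : rcfType) (delta : R) :
  0 < delta ->
  exists p : nat -> R,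
    (exists (c1 c2 : R) (N : nat), 0 < c1 /\ 0 < c2 /\
       forall n : nat, (N <= n)%N ->
         c1 / Num.sqrt (n%:R) <= p n <= c2 / Num.sqrt (n%:R)) /\
    (forall n : nat, 0 <= p n <= 1 /\
       forall mu : 'F_2, 1 - delta <= correct_prob (p n) n mu).
Proof.
move=> d0.
set m := Num.min delta 1.
have m0 : 0 < m by rewrite lt_min d0 ltr01.
have m1 : m <= 1 by rewrite ge_min lexx orbT.
have md : m <= delta by rewrite ge_min lexx.
have hk1 : forall k : nat, m / k%:R <= 1.
  case=> [|k]; first by rewrite invr0 mulr0 ler01.
  rewrite ler_pdivrMr ?ltr0Sn // mul1r; apply: le_trans m1 _; by rewrite ler1n.
have hk2 : forall k : nat, k%:R * (m / k%:R) <= m.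
  case=> [|k]; first by rewrite mul0r ltW.
  by rewrite mulrCA divff ?mulr1 // pnatr_eq0.
exists (fun n => Num.sqrt m / Num.sqrt n%:R); split.
  exists (Num.sqrt m), (Num.sqrt m), 0%N.
  split; first by rewrite sqrtr_gt0.
  split; first by rewrite sqrtr_gt0.
  by move=> n _; rewrite lexx.
move=> n.
set q := Num.sqrt m / Num.sqrt n%:R.
have q0 : 0 <= q by rewrite divr_ge0 ?sqrtr_ge0.
have q2 : q ^+ 2 = m / n%:R by rewrite /q expr_div_n !sqr_sqrtr ?ler0n ?ltW.
have q21 : q ^+ 2 <= 1 by rewrite q2.
have nq : n%:R * q ^+ 2 <= m by rewrite q2.
have q1 : q <= 1 by rewrite expr2 in q21; nra.
split; first by rewrite q0 q1.
move=> mu; rewrite cp_eq.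
have hq : 0 <= q <= 1 by rewrite q0 q1.
have hT := Tbound R q n hq.
have hq2 : 0 <= q ^+ 2 <= 1 by rewrite exprn_ge0 // q21.
have hB := bernoulli R (q ^+ 2) n hq2.
apply: le_trans hT; apply: le_trans hB.
lra.
Qed.
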